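(* Let $(p_{ij})_{i,j\in\{0,1\}}$ be a transition matrix with all $p_{ij}\in(0,1)$, and for $i\in\{0,1\}$, $n\in\mathbb N_0$ let $I_n^i$ be binomially $B(n,p_{i0})$ distributed. Let $(a_i(n))_{n\in\mathbb N_0}$, $(\varepsilon_i(n))_{n\in\mathbb N_0}$, $i\in\{0,1\}$, be real sequences satisfying $$a_i(n)=\mathbb E[a_0(I_n^i)]+\mathbb E[a_1(n-I_n^i)]+\varepsilon_i(n),\qquad i\in\{0,1\},\ n\in\mathbb N.$$ If $\varepsilon_i(n)=O(n^\alpha)$ for some $\alpha\in\mathbb R$ and both $i\in\{0,1\}$, then as $n\to\infty$, $a_i(n)=O(n)$ if $\alpha<1$, $a_i(n)=O(n^\alpha)$ if $\alpha>1$, and $a_i(n)=O(n\log n)$ if $\alpha=1$. *)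

(* Defs.v *)
From mathcomp Require Import all_boot all_order all_algebra.
From mathcomp Require Import reals exp.
Set Implicit Arguments. Unset Strict Implicit. Unset Printing Implicit Defensive.
Import Order.TTheory GRing.Theory Num.Theory.
Local Open Scope ring_scope.

Definition binom_exp (R : realType) (q : R) (n : nat) (f : nat -> R) : R :=
  \sum_(k < n.+1) ('C(n, k))%:R * q ^+ k * (1 - q) ^+ (n - k) * f k.

Definition bigO_seq (R : realType) (u v : nat -> R) : Prop :=
  exists C : R, exists N : nat, forall n : nat, (N <= n)%N -> `|u n| <= C * v n.

(* Main.v *)
Require Import Defs.
From mathcomp Require Import all_boot all_order all_algebra.
From mathcomp Require Import boolp reals exp.
From mathcomp.algebra_tactics Require Import ring lra.
Import Order.TTheory GRing.Theory Num.Theory.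
Local Open Scope ring_scope.

Section BE.
Variable R : realType.
Implicit Types (q c : R) (f g : nat -> R).

Lemma bexp_nat q n f : binom_exp q n f =
  \sum_(0 <= k < n.+1) ('C(n, k))%:R * q ^+ k * (1 - q) ^+ (n - k) * f k.
Proof. by rewrite /binom_exp big_mkord. Qed.

Lemma bexp0 q f : binom_exp q 0 f = f 0%N.
Proof. by rewrite /binom_exp big_ord_recl big_ord0 /= bin0 !expr0 !mul1r addr0. Qed.

Lemma bexpS q n f : binom_exp q n.+1 f =
  q * binom_exp q n (fun k => f k.+1) + (1 - q) * binom_exp q n f.
Proof.
rewrite !bexp_nat big_nat_recl // bin0 expr0 mul1r subn0.
under eq_bigr do rewrite binS subSS natrD !mulrDl.
rewrite big_split /= mulr_sumr.
rewrite [X in _ + (_ * X)]big_nat_recl // mulrDr.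
rewrite [X in _ + (X + _)]big_nat_recr //= bin_small // mul0r !mul0r addr0.
rewrite mulr_sumr.
have -> : \sum_(0 <= i < n) ('C(n, i.+1))%:R * q ^+ i.+1 * (1 - q) ^+ (n - i) * f i.+1
   = \sum_(0 <= i < n) (1 - q) * (('C(n, i.+1))%:R * q ^+ i.+1 * (1 - q) ^+ (n - i.+1) * f i.+1).
  rewrite !big_nat; apply: eq_bigr => i /andP[_ hi].
  rewrite subnS; case E: (n - i)%N => [|m].
    by move/eqP: E; rewrite subn_eq0 leqNgt hi.
  rewrite /= [(1 - q) ^+ m.+1]exprS; ring.
rewrite bin0 expr0 subn0 mul1r.
have -> : \sum_(0 <= i < n.+1) q * (('C(n, i))%:R * q ^+ i * (1 - q) ^+ (n - i) * f i.+1)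
   = \sum_(0 <= i < n.+1) ('C(n, i))%:R * q ^+ i.+1 * (1 - q) ^+ (n - i) * f i.+1.
  by apply: eq_bigr => i _; rewrite exprS; ring.
rewrite exprS; ring.
Qed.


Lemma bexpD q n f g : binom_exp q n (fun k => f k + g k) = binom_exp q n f + binom_exp q n g.
Proof. by rewrite /binom_exp -big_split; apply: eq_bigr => i _; rewrite mulrDr. Qed.

Lemma bexpZ q n c f : binom_exp q n (fun k => c * f k) = c * binom_exp q n f.
Proof. by rewrite /binom_exp mulr_sumr; apply: eq_bigr => i _; rewrite mulrCA. Qed.

Lemma bexpC q n c : binom_exp q n (fun _ => c) = c.
Proof.
elim: n => [|n IH]; first by rewrite bexp0.
by rewrite bexpS IH; ring.
Qed.

Lemma bexp_ext q n f g : (forall k, (k <= n)%N -> f k = g k) ->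
  binom_exp q n f = binom_exp q n g.
Proof. by move=> H; rewrite !bexp_nat !big_nat; apply: eq_bigr => i /andP[_ hi]; rewrite H. Qed.

Lemma bexp_le q n f g : 0 <= q <= 1 -> (forall k, (k <= n)%N -> f k <= g k) ->
  binom_exp q n f <= binom_exp q n g.
Proof.
move=> /andP[q0 q1] H; rewrite !bexp_nat !big_nat; apply: ler_sum => i /andP[_ hi].
apply: ler_wpM2l; last exact: H.
by rewrite !mulr_ge0 ?exprn_ge0 ?subr_ge0.
Qed.

Lemma bexp_norm q n f : 0 <= q <= 1 ->
  `|binom_exp q n f| <= binom_exp q n (fun k => `|f k|).
Proof.
move=> /andP[q0 q1]; rewrite /binom_exp; apply: le_trans (ler_norm_sum _ _ _) _.
apply: ler_sum => i _; rewrite normrM ger0_norm //.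
by rewrite !mulr_ge0 ?exprn_ge0 ?subr_ge0.
Qed.

Lemma bexp_rev q n f : binom_exp q n (fun k => f (n - k)%N) = binom_exp (1 - q) n f.
Proof.
rewrite /binom_exp (reindex_inj rev_ord_inj) /=; apply: eq_bigr => i _.
have hi : (i <= n)%N by rewrite -ltnS.
rewrite subSS subKn // bin_sub //.
have -> : (1 - (1 - q)) = q by ring.
ring.
Qed.

Lemma bexp_last q n f g : 0 <= q <= 1 -> (forall k, (k < n)%N -> g k <= f k) ->
  binom_exp q n g <= binom_exp q n f + q ^+ n * (g n - f n).
Proof.
move=> /andP[q0 q1] H.
rewrite -subr_ge0.
have -> : binom_exp q n f + q ^+ n * (g n - f n) - binom_exp q n g =
  binom_exp q n (fun k => f k - g k) + q ^+ n * (g n - f n).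
  have -> : (fun k => f k - g k) = (fun k => f k + (-1) * g k) by apply: funext => k; ring.
  rewrite bexpD bexpZ; ring.
rewrite bexp_nat big_nat_recr //= binn subnn expr0 mul1r mulr1.
rewrite -addrA -mulrDr.
have -> : f n - g n + (g n - f n) = 0 by ring.
rewrite mulr0 addr0 big_nat; apply: sumr_ge0 => i /andP[_ hi].
by rewrite !mulr_ge0 ?exprn_ge0 ?subr_ge0 // H.
Qed.

Lemma bexpM1 q n : binom_exp q n (fun k => k%:R) = n%:R * q.
Proof.
elim: n => [|n IH]; first by rewrite bexp0 mul0r.
rewrite bexpS IH.
have -> : (fun k : nat => (k.+1)%:R : R) = (fun k => k%:R + 1) by apply: funext => k; rewrite -natr1.
by rewrite bexpD bexpC IH -natr1; ring.
Qed.

Lemma bexpM2 q n : binom_exp q n (fun k => k%:R ^+ 2) = n%:R * q * (1 - q) + (n%:R * q) ^+ 2.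
Proof.
elim: n => [|n IH]; first by rewrite bexp0 !mul0r expr0n /= addr0.
rewrite bexpS IH.
have -> : (fun k : nat => (k.+1)%:R ^+ 2 : R) = (fun k => k%:R ^+ 2 + (2 * k%:R + 1))
  by apply: funext => k; rewrite -natr1; ring.
by rewrite bexpD bexpD bexpC bexpZ IH bexpM1 -natr1; ring.
Qed.

Lemma bexp_quad q n c0 c1 c2 :
  binom_exp q n (fun k => c0 + c1 * k%:R + c2 * k%:R ^+ 2) =
  c0 + c1 * (n%:R * q) + c2 * (n%:R * q * (1 - q) + (n%:R * q) ^+ 2).
Proof. by rewrite !bexpD bexpC !bexpZ bexpM1 bexpM2. Qed.

End BE.

Section PW.
Variable R : realType.
Implicit Types (q c t g x y : R).

Lemma bern g t : 0 <= g <= 1 -> 0 <= t -> t `^ g <= 1 + g * (t - 1).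
Proof.
move=> /andP[g0 g1] t0.
have [->|gn0] := eqVneq g 0; first by rewrite powRr0 mul0r addr0.
have [->|gn1] := eqVneq g 1; first by rewrite powRr1 // mul1r; lra.
have gp : 0 < g by rewrite lt0r gn0.
have g1' : g < 1 by rewrite lt_neqAle gn1.
have [->|tn0] := eqVneq t 0; first by rewrite powR0 //; lra.
have tp : 0 < t by rewrite lt0r tn0.
have p0 : 0 < g^-1 by rewrite invr_gt0.
have q0 : 0 < (1 - g)^-1 by rewrite invr_gt0 subr_gt0.
have pq : (g^-1)^-1 + ((1 - g)^-1)^-1 = 1 by rewrite !invrK; ring.
have h := @conjugate_powR R (t `^ g) 1 g^-1 (1 - g)^-1 (powR_ge0 _ _) ler01
  p0 q0 pq.
move: h; rewrite mulr1 -powRrM mulfV // powRr1 ?(ltW tp) // powR1 !invrK.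
lra.
Qed.

Lemma t_upper b t : 1 <= b <= 2 -> 0 <= t -> t `^ b <= t + (b - 1) * (t ^+ 2 - t).
Proof.
move=> /andP[b1 b2] t0.
rewrite -mulr_powRB1 //; last lra.
have h := @bern (b - 1) t (ltac:(apply/andP; split; lra)) t0.
have := ler_wpM2l t0 h.
have -> : t * (1 + (b - 1) * (t - 1)) = t + (b - 1) * (t ^+ 2 - t) by ring.
done.
Qed.

Lemma t_lower b t : 0 < b < 1 -> 0 <= t ->
  1 + b * (t - 1) - (1 - b) * (t - 1) ^+ 2 <= t `^ b.
Proof.
move=> /andP[b0 b1] t0.
have [->|tn0] := eqVneq t 0.
  rewrite powR0 ?gt_eqF //.
  have -> : 1 + b * (0 - 1) - (1 - b) * (0 - 1) ^+ 2 = 0 :> R by ring.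
  done.
have tp : 0 < t by rewrite lt0r tn0.
set T := t `^ b; set S := t `^ (1 - b).
have TS : T * S = t.
  rewrite /T /S -powRD; last by rewrite tn0 implybT.
  by rewrite addrC subrK powRr1 // ltW.
have Sd : S <= 1 + (1 - b) * (t - 1).
  by apply: bern => //; apply/andP; split; lra.
have T0 : 0 <= T by apply: powR_ge0.
set d := 1 + (1 - b) * (t - 1).
have d0 : 0 < d by rewrite /d; nra.
set L := 1 + b * (t - 1) - (1 - b) * (t - 1) ^+ 2.
have Ld : L * d <= t.
  have -> : L * d = t - (1 - b) ^+ 2 * (t - 1) ^+ 2 * t by rewrite /L /d; ring.
  rewrite lerBlDr lerDl; apply: mulr_ge0 => //; apply: mulr_ge0; apply: sqr_ge0.
have TSd : T * S <= T * d by apply: ler_wpM2l.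
have : L * d <= T * d by lra.
by rewrite ler_pM2r.
Qed.

Lemma xlnx x y : 0 <= x -> 0 < y -> x * ln x <= x * ln y + x * (x - y) / y.
Proof.
move=> x0 y0; have [->|xn0] := eqVneq x 0; first by rewrite !mul0r add0r.
have xp : 0 < x by rewrite lt0r xn0.
have h : ln (x / y) <= x / y - 1.
  have := @le_ln1Dx R (x / y - 1).
  have -> : 1 + (x / y - 1) = x / y by ring. apply.
  have : 0 < x / y by apply: divr_gt0.
  lra.
rewrite ln_div ?posrE // in h.
have := ler_wpM2l x0 h.
have -> : x * (x / y - 1) = x * (x - y) / y by field; rewrite gt_eqF.
lra.
Qed.

End PW.

Section EB.
Variable R : realType.

Lemma Elow (b q : R) n : 0 < b < 1 -> 0 < q < 1 -> (0 < n)%N ->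
  q `^ b * n%:R `^ b - (q `^ b / q) * (n%:R `^ b / n%:R)
    <= binom_exp q n (fun k => k%:R `^ b).
Proof.
move=> /andP[b0 b1] /andP[q0 q1] n0.
have nR : 0 < n%:R :> R by rewrite ltr0n.
set y := n%:R * q.
have y0 : 0 < y by rewrite /y mulr_gt0.
have pw : forall k : nat, y `^ b * (0 + (2 - b) / y * k%:R + (- (1 - b) / y ^+ 2) * k%:R ^+ 2)
    <= k%:R `^ b.
  move=> k.
  have e : k%:R `^ b = (k%:R / y) `^ b * y `^ b.
    rewrite -powRM; [by rewrite divfK // gt_eqF | by rewrite divr_ge0 ?ler0n ?ltW | by apply: ltW].
  rewrite e mulrC; apply: ler_wpM2r; first exact: powR_ge0.
  have := @t_lower R b (k%:R / y) (ltac:(by apply/andP)) (ltac:(by rewrite divr_ge0 ?ler0n ?ltW)).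
  move=> H; apply: (le_trans _ H).
  by rewrite le_eqVlt; apply/orP; left; apply/eqP; field; rewrite gt_eqF.
apply: (le_trans _ (@bexp_le R q n _ _ _ (fun k _ => pw k))); last by apply/andP; split; apply: ltW.
rewrite bexpZ bexp_quad -/y.
have Y : y `^ b = q `^ b * n%:R `^ b by rewrite /y powRM ?ltW // mulrC.
rewrite -Y.
set Y' := y `^ b.
have Y0 : 0 <= Y' by apply: powR_ge0.
have -> : Y' * (0 + (2 - b) / y * y + - (1 - b) / y ^+ 2 * (y * (1 - q) + y ^+ 2))
   = Y' - (1 - b) * (1 - q) * (Y' / y) by field; rewrite gt_eqF.
have -> : q `^ b / q * (n%:R `^ b / n%:R) = Y' / y.
  by rewrite /Y' Y /y; field; apply/andP; split; rewrite gt_eqF.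
have Yy : 0 <= Y' / y by rewrite divr_ge0 // ltW.
have c1 : (1 - b) * (1 - q) <= 1 by nra.
nra.
Qed.

Lemma Eup (a q : R) n : 1 < a -> 0 < q < 1 -> (0 < n)%N ->
  binom_exp q n (fun k => k%:R `^ a)
    <= q `^ (Num.min a 2) * n%:R `^ a + (q `^ (Num.min a 2) / q) * (n%:R `^ a / n%:R).
Proof.
move=> a1 /andP[q0 q1] n0.
set b := Num.min a 2.
have b1 : 1 <= b by rewrite /b le_min ltW //; lra.
have b2 : b <= 2 by rewrite /b ge_min lexx orbT.
have ba : b <= a by rewrite /b ge_min lexx.
have nR : 0 < n%:R :> R by rewrite ltr0n.
set y := n%:R * q.
have y0 : 0 < y by rewrite /y mulr_gt0.
have pw : forall k : nat, (k <= n)%N -> k%:R `^ a <=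
    n%:R `^ (a - b) * (y `^ b * (0 + (2 - b) / y * k%:R + ((b - 1) / y ^+ 2) * k%:R ^+ 2)).
  move=> k kn.
  have h := @powRD R k%:R b (a - b).
  rewrite (_ : b + (a - b) = a) in h; last by ring.
  rewrite h; last by rewrite gt_eqF //; lra.
  rewrite mulrC; apply: ler_pM; [exact: powR_ge0 | exact: powR_ge0 | |].
    apply: ge0_ler_powR; rewrite ?nnegrE ?ler0n ?ler_nat //; lra.
  have e : k%:R `^ b = (k%:R / y) `^ b * y `^ b.
    rewrite -powRM; [by rewrite divfK // gt_eqF | by rewrite divr_ge0 ?ler0n ?ltW | by apply: ltW].
  rewrite e mulrC; apply: ler_wpM2l; first exact: powR_ge0.
  have := @t_upper R b (k%:R / y) (ltac:(by apply/andP)) (ltac:(by rewrite divr_ge0 ?ler0n ?ltW)).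
  move=> H; apply: (le_trans H).
  by rewrite le_eqVlt; apply/orP; left; apply/eqP; field; rewrite gt_eqF.
apply: (le_trans (@bexp_le R q n _ _ _ pw)); first by apply/andP; split; apply: ltW.
rewrite bexpZ bexpZ bexp_quad -/y.
have Y : y `^ b = q `^ b * n%:R `^ b by rewrite /y powRM ?ltW // mulrC.
have nab : n%:R `^ (a - b) * n%:R `^ b = n%:R `^ a :> R.
  by rewrite -powRD ?subrK // (gt_eqF nR) implybT.
have -> : n%:R `^ (a - b) * (y `^ b * (0 + (2 - b) / y * y + (b - 1) / y ^+ 2 * (y * (1 - q) + y ^+ 2)))
   = (q `^ b * n%:R `^ a) * (1 + (b - 1) * (1 - q) / y).
  by rewrite Y -nab; field; rewrite gt_eqF.
have -> : q `^ b / q * (n%:R `^ a / n%:R) = (q `^ b * n%:R `^ a) / y.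
  by rewrite /y; field; apply/andP; split; rewrite gt_eqF.
set Z := q `^ b * n%:R `^ a.
have Z0 : 0 <= Z by rewrite mulr_ge0 ?powR_ge0.
have -> : Z * (1 + (b - 1) * (1 - q) / y) = Z + (b - 1) * (1 - q) * (Z / y) by field; rewrite gt_eqF.
have Zy : 0 <= Z / y by rewrite divr_ge0 // ltW.
have c1 : (b - 1) * (1 - q) <= 1 by nra.
nra.
Qed.

Lemma Eln (q : R) n : 0 < q < 1 -> (0 < n)%N ->
  binom_exp q n (fun k => k%:R * ln k%:R)
    <= n%:R * q * ln n%:R + n%:R * q * ln q + 1.
Proof.
move=> /andP[q0 q1] n0.
have nR : 0 < n%:R :> R by rewrite ltr0n.
set y := n%:R * q.
have y0 : 0 < y by rewrite /y mulr_gt0.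
have pw : forall k : nat, (k <= n)%N -> k%:R * ln k%:R <=
    0 + (ln y - 1) * k%:R + (1 / y) * k%:R ^+ 2.
  move=> k _; apply: (le_trans (@xlnx R k%:R y (ler0n _ _) y0)).
  by rewrite le_eqVlt; apply/orP; left; apply/eqP; field; rewrite gt_eqF.
apply: (le_trans (@bexp_le R q n _ _ _ pw)); first by apply/andP; split; apply: ltW.
rewrite bexp_quad -/y.
have -> : 0 + (ln y - 1) * y + 1 / y * (y * (1 - q) + y ^+ 2) = y * ln y + (1 - q).
  by field; rewrite gt_eqF.
rewrite /y lnM ?posrE //; lra.
Qed.

End EB.

Section SUP.
Variable R : realType.

Lemma pow_lt_self (q : R) n : 0 < q < 1 -> (1 < n)%N -> q ^+ n < q.
Proof.
move=> /andP[q0 q1]; case: n => [|[|m]] // _.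
rewrite exprS; have h : q ^+ m.+1 < 1 by rewrite expr_lt1 // ltW.
have h0 : 0 <= q ^+ m.+1 by rewrite exprn_ge0 // ltW.
nra.
Qed.

Lemma super (q : 'I_2 -> R) (a eps : 'I_2 -> nat -> R) (f : nat -> R) N0 :
 (forall i, 0 < q i < 1) -> (1 < N0)%N ->
 (forall (i : 'I_2) n, (0 < n)%N -> a i n = binom_exp (q i) n (a 0)
     + binom_exp (q i) n (fun k => a 1 (n - k)%N) + eps i n) ->
 (forall i n, (n < N0)%N -> `|a i n| <= f n) ->
 (forall i n, (N0 <= n)%N -> binom_exp (q i) n f
     + binom_exp (q i) n (fun k => f (n - k)%N) + `|eps i n| <= f n) ->
 forall n i, `|a i n| <= f n.
Proof.
move=> hq N1 rec init sup; elim/ltn_ind => n IH i.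
case: (ltnP n N0) => [lt|ge]; first exact: init.
have n0 : (0 < n)%N by apply: leq_trans ge; apply: ltnW.
have n1 : (1 < n)%N by apply: leq_trans ge.
have key : forall j : 'I_2, `|a j n| - f n <= (q j) ^+ n * (`|a 0 n| - f n)
    + (1 - q j) ^+ n * (`|a 1 n| - f n).
  move=> j.
  have qj := hq j; have /andP[qj0 qj1] := qj.
  have q01 : 0 <= q j <= 1 by rewrite !ltW.
  have q01' : 0 <= 1 - q j <= 1 by apply/andP; split; lra.
  rewrite rec //.
  have h1 := @bexp_norm R (q j) n (a 0) q01.
  have h2 := @bexp_norm R (q j) n (fun k => a 1 (n - k)%N) q01.
  have h3 : binom_exp (q j) n (fun k => `|a 0 k|) <=
     binom_exp (q j) n f + (q j) ^+ n * (`|a 0 n| - f n).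
    by apply: bexp_last => // k kn; apply: IH.
  have h4 : binom_exp (q j) n (fun k => `|a 1 (n - k)%N|) <=
     binom_exp (q j) n (fun k => f (n - k)%N) + (1 - q j) ^+ n * (`|a 1 n| - f n).
    rewrite (@bexp_rev R (q j) n (fun k => `|a 1 k|)) (@bexp_rev R (q j) n f).
    by apply: bexp_last => // k kn; apply: IH.
  have h5 := sup j n ge.
  have h6 := ler_normD (binom_exp (q j) n (a 0) + binom_exp (q j) n (fun k => a 1 (n - k)%N)) (eps j n).
  have h7 := ler_normD (binom_exp (q j) n (a 0)) (binom_exp (q j) n (fun k => a 1 (n - k)%N)).
  lra.
have k0 := key 0; have k1 := key 1.
have /andP[q00 q01] := hq 0; have /andP[q10 q11] := hq 1.
have c0 : (q 0) ^+ n + (1 - q 0) ^+ n < 1.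
  have := @pow_lt_self _ n (hq 0) n1; have : 0 < 1 - q 0 < 1 by apply/andP; split; lra.
  move=> h H; have := @pow_lt_self _ n h n1; lra.
have c1 : (q 1) ^+ n + (1 - q 1) ^+ n < 1.
  have := @pow_lt_self _ n (hq 1) n1; have : 0 < 1 - q 1 < 1 by apply/andP; split; lra.
  move=> h H; have := @pow_lt_self _ n h n1; lra.
have e00 : 0 <= (q 0) ^+ n by rewrite exprn_ge0 // ltW.
have e01 : 0 <= (1 - q 0) ^+ n by rewrite exprn_ge0 // subr_ge0 ltW.
have e10 : 0 <= (q 1) ^+ n by rewrite exprn_ge0 // ltW.
have e11 : 0 <= (1 - q 1) ^+ n by rewrite exprn_ge0 // subr_ge0 ltW.
have both : `|a 0 n| - f n <= 0 /\ `|a 1 n| - f n <= 0.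
  set d0 := `|a 0 n| - f n in k0 k1 *; set d1 := `|a 1 n| - f n in k0 k1 *.
  case: (lerP d0 d1) => h.
    have : d1 <= 0 by nra.
    lra.
  have : d0 <= 0 by nra.
  lra.
case: i => [[|[|//]]] Hi.
  have -> : Ordinal Hi = 0 by apply: val_inj.
  case: both; lra.
have -> : Ordinal Hi = 1 by apply: val_inj.
case: both; lra.
Qed.

End SUP.

Section CASES.
Variable R : realType.

Lemma I2_ind (P : 'I_2 -> Prop) : P 0 -> P 1 -> forall i, P i.
Proof.
move=> h0 h1 [[|[|//]]] Hi.
  by have -> : Ordinal Hi = 0 by apply: val_inj.
by have -> : Ordinal Hi = 1 by apply: val_inj.
Qed.

Lemma term_le_sum (F : nat -> R) N m : (forall k, 0 <= F k) -> (m < N)%N ->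
  F m <= \sum_(k < N) F k.
Proof.
move=> F0 lt; rewrite (bigD1 (Ordinal lt)) //= lerDl.
by apply: sumr_ge0 => k _.
Qed.

Lemma bexp_aff q n (h : nat -> R) c B K0 :
  binom_exp q n (fun k => c * h k + B * k%:R + K0) = c * binom_exp q n h + B * (n%:R * q) + K0.
Proof. by rewrite !bexpD bexpC !bexpZ bexpM1. Qed.

Lemma natge1 n : (0 < n)%N -> 1 <= n%:R :> R.
Proof. by move=> n0; rewrite ler1n. Qed.

Lemma powR_ge1n n (b : R) : (0 < n)%N -> 0 <= b -> 1 <= n%:R `^ b.
Proof.
move=> n0 b0; have := ler_powR (@natge1 n n0) b0; by rewrite powRr0.
Qed.

Lemma bound_nat (x : R) : exists N : nat, x <= N%:R.
Proof.
case: (lerP x 0) => h; first by exists 0%N.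
by exists (Num.Def.archi_bound x); apply: ltW; apply: archi_boundP; apply: ltW.
Qed.

Lemma case_lt (q : 'I_2 -> R) (a eps : 'I_2 -> nat -> R) (b Ce : R) Ne :
  (forall i, 0 < q i < 1) -> 0 < b < 1 -> 0 <= Ce ->
  (forall (i : 'I_2) n, (0 < n)%N -> a i n = binom_exp (q i) n (a 0)
     + binom_exp (q i) n (fun k => a 1 (n - k)%N) + eps i n) ->
  (forall i n, (Ne <= n)%N -> `|eps i n| <= Ce * n%:R `^ b) ->
  forall i, bigO_seq (a i) (fun n => n%:R).
Proof.
move=> hq /andP[b0 b1] Ce0 rec hE.
pose rr i := q i `^ b + (1 - q i) `^ b - 1.
pose KK i := q i `^ b / q i + (1 - q i) `^ b / (1 - q i).
have rpos : forall i, 0 < rr i.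
  move=> i; have /andP[q0 q1] := hq i.
  have h1 : q i <= q i `^ b by apply: ger1_powR; [rewrite q0 ltW | rewrite ltW].
  have h2 : 1 - q i < (1 - q i) `^ b.
    rewrite /powR gt_eqF ?subr_gt0 //.
    rewrite -{1}(@lnK R (1 - q i)) ?posrE ?subr_gt0 //.
    rewrite ltr_expR; have : ln (1 - q i) < 0 by apply: ln_lt0; apply/andP; split; lra.
    nra.
  rewrite /rr; lra.
have Kpos : forall i, 0 <= KK i.
  move=> i; have /andP[q0 q1] := hq i.
  by rewrite /KK addr_ge0 // divr_ge0 ?powR_ge0 // ?subr_ge0 ltW.
pose r := Num.min (rr 0) (rr 1); pose K := Num.max (KK 0) (KK 1).
have r0 : 0 < r by rewrite /r lt_min !rpos.
have rle : forall i, r <= rr i by apply: I2_ind; rewrite /r ge_min lexx ?orbT.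
have Kle : forall i, KK i <= K by apply: I2_ind; rewrite /K le_max lexx ?orbT.
have K0' : 0 <= K by apply: le_trans (Kle 0); apply: Kpos.
pose K0 := `|a 0 0%N| + `|a 1 0%N|.
have K00 : 0 <= K0 by rewrite addr_ge0.
pose D := 2 * (2 * K0 + Ce) / r.
have D0 : 0 <= D by rewrite /D; apply: divr_ge0; [nra | exact: ltW].
have [Nb hNb] := bound_nat (2 * K / r).
pose N0 := maxn (maxn 2 Ne) Nb.
pose B := \sum_(m < N0) (`|a 0 m| + `|a 1 m| + D * m%:R `^ b).
have B0 : 0 <= B by apply: sumr_ge0 => m _; rewrite !addr_ge0 // mulr_ge0 // powR_ge0.
pose f n := if n is 0 then K0 else B * n%:R - D * n%:R `^ b.
have fpt : forall k, f k <= (- D) * k%:R `^ b + B * k%:R + K0.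
  case=> [|k]; first by rewrite /f (_ : 0%:R = 0 :> R) // powR0 ?gt_eqF //; lra.
  rewrite /f; lra.
have N02 : (1 < N0)%N by rewrite /N0 !leq_max ltnSn.
have main := @super R q a eps f N0 hq N02 rec.
have bd : forall n i, `|a i n| <= f n.
  apply: main => //.
    move=> i [_|n lt]; first by rewrite /f /K0; have h1 := normr_ge0 (a 0 0%N); have h2 := normr_ge0 (a 1 0%N); move: i; apply: I2_ind; lra.
    have T := @term_le_sum (fun m => `|a 0 m| + `|a 1 m| + D * m%:R `^ b) N0 n.+1
      (fun k => ltac:(by rewrite !addr_ge0 // mulr_ge0 // powR_ge0)) lt.
    rewrite /f -/B; have Bn : B <= B * n.+1%:R by rewrite ler_peMr // natge1.
    have : `|a i n.+1| <= `|a 0 n.+1| + `|a 1 n.+1|.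
      have h1 := normr_ge0 (a 0 n.+1); have h2 := normr_ge0 (a 1 n.+1).
      by move: i; apply: I2_ind; lra.
    simpl in T; rewrite -/B in T; lra.
  move=> i n ge.
  have n2 : (2 <= n)%N by apply: leq_trans ge; rewrite /N0 !leq_max leqnn.
  have n0 : (0 < n)%N by apply: leq_trans n2.
  have hNe : (Ne <= n)%N by apply: leq_trans ge; rewrite /N0 !leq_max leqnn orbT.
  have hNb' : (Nb <= n)%N by apply: leq_trans ge; rewrite /N0 !leq_max leqnn orbT.
  have /andP[q0 q1] := hq i.
  have q01 : 0 <= q i <= 1 by rewrite !ltW.
  have q01' : 0 <= 1 - q i <= 1 by apply/andP; split; lra.
  have q01'' : 0 < 1 - q i < 1 by apply/andP; split; lra.
  rewrite (@bexp_rev R (q i) n f).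
  have e1 := @bexp_le R (q i) n _ _ q01 (fun k _ => fpt k).
  have e2 := @bexp_le R (1 - q i) n _ _ q01' (fun k _ => fpt k).
  rewrite bexp_aff in e1; rewrite bexp_aff in e2.
  have l1 := @Elow R b (q i) n (ltac:(by apply/andP)) (hq i) n0.
  have l2 := @Elow R b (1 - q i) n (ltac:(by apply/andP)) q01'' n0.
  have ee := hE i n hNe.
  have fn : f n = B * n%:R - D * n%:R `^ b by case: (n) n0.
  rewrite fn.
  set X := n%:R `^ b.
  set Y := X / n%:R.
  have X1 : 1 <= X by exact: (@powR_ge1n n b n0 (ltW b0)).
  have nR : 0 < n%:R :> R by rewrite ltr0n.
  have Y0 : 0 <= Y by apply: divr_ge0; [exact: (le_trans ler01 X1) | exact: ler0n].
  have rri := rle i; have Kli := Kle i.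
  have hK : K * Y <= r / 2 * X.
    have : 2 * K / r <= n%:R by apply: le_trans hNb _; rewrite ler_nat.
    rewrite /Y => h.
    have h' : 2 * K <= r * n%:R by rewrite -ler_pdivrMl // mulrC.
    rewrite mulrA ler_pdivrMr // mulrAC; apply: ler_wpM2r; first exact: le_trans X1.
    lra.
  have gap : (q i `^ b + (1 - q i) `^ b) * X - KK i * Y <=
    binom_exp (q i) n (fun k => k%:R `^ b) + binom_exp (1 - q i) n (fun k => k%:R `^ b).
    move: l1 l2; rewrite /KK -/X -/Y; lra.
  have hsum : (q i `^ b + (1 - q i) `^ b) = 1 + rr i by rewrite /rr; ring.
  rewrite hsum in gap.
  have g2 : (1 + r) * X - K * Y <= (1 + rr i) * X - KK i * Y.
    have : r * X <= rr i * X by apply: ler_wpM2r => //; apply: le_trans X1.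
    have : KK i * Y <= K * Y by apply: ler_wpM2r.
    lra.
  have Dg : D * ((1 + r) * X - K * Y) <= D * (binom_exp (q i) n (fun k => k%:R `^ b)
      + binom_exp (1 - q i) n (fun k => k%:R `^ b)).
    by apply: ler_wpM2l => //; lra.
  have DKY : D * (K * Y) <= D * (r / 2 * X) by apply: ler_wpM2l.
  have Dr : D * (r / 2) = 2 * K0 + Ce by rewrite /D; field; rewrite gt_eqF.
  have C1 : 2 * K0 + Ce * X <= (2 * K0 + Ce) * X by nra.
  have hlin : B * (n%:R * q i) + B * (n%:R * (1 - q i)) = B * n%:R by ring.
  have : D * (r / 2 * X) = (2 * K0 + Ce) * X by rewrite mulrA Dr.
  move=> hh; rewrite -/X in ee; lra.
move=> i; exists B, 1%N => n n1.
apply: le_trans (bd n i) _.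
case: n n1 => // n _; rewrite /f.
have : 0 <= D * n.+1%:R `^ b by rewrite mulr_ge0 // powR_ge0.
lra.
Qed.

End CASES.

Section CASES2.
Variable R : realType.

Lemma powR_lt_self (x b : R) : 0 < x < 1 -> 1 < b -> x `^ b < x.
Proof.
move=> /andP[x0 x1] b1.
rewrite /powR gt_eqF //.
rewrite -[X in _ < X](@lnK R x) ?posrE //.
rewrite ltr_expR; have : ln x < 0 by apply: ln_lt0; apply/andP.
nra.
Qed.

Lemma case_gt (q : 'I_2 -> R) (a eps : 'I_2 -> nat -> R) (al Ce : R) Ne :
  (forall i, 0 < q i < 1) -> 1 < al -> 0 <= Ce ->
  (forall (i : 'I_2) n, (0 < n)%N -> a i n = binom_exp (q i) n (a 0)
     + binom_exp (q i) n (fun k => a 1 (n - k)%N) + eps i n) ->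
  (forall i n, (Ne <= n)%N -> `|eps i n| <= Ce * n%:R `^ al) ->
  forall i, bigO_seq (a i) (fun n => n%:R `^ al).
Proof.
move=> hq al1 Ce0 rec hE.
pose b := Num.min al 2.
have b1 : 1 < b by rewrite /b lt_min al1; lra.
pose rr i := 1 - (q i `^ b + (1 - q i) `^ b).
pose KK i := q i `^ b / q i + (1 - q i) `^ b / (1 - q i).
have rpos : forall i, 0 < rr i.
  move=> i; have /andP[q0 q1] := hq i.
  have h1 := @powR_lt_self (q i) b (hq i) b1.
  have h2 : 0 < 1 - q i < 1 by apply/andP; split; lra.
  have h3 := @powR_lt_self (1 - q i) b h2 b1.
  rewrite /rr; lra.
have Kpos : forall i, 0 <= KK i.
  move=> i; have /andP[q0 q1] := hq i.
  by rewrite /KK addr_ge0 // divr_ge0 ?powR_ge0 // ?subr_ge0 ltW.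
pose r := Num.min (rr 0) (rr 1); pose K := Num.max (KK 0) (KK 1).
have r0 : 0 < r by rewrite /r lt_min !rpos.
have rle : forall i, r <= rr i by apply: I2_ind; rewrite /r ge_min lexx ?orbT.
have Kle : forall i, KK i <= K by apply: I2_ind; rewrite /K le_max lexx ?orbT.
have K0' : 0 <= K by apply: le_trans (Kle 0); apply: Kpos.
pose K0 := `|a 0 0%N| + `|a 1 0%N|.
have K00 : 0 <= K0 by rewrite addr_ge0.
pose A := 2 * (2 * K0 + Ce) / r.
have A0 : 0 <= A by rewrite /A; apply: divr_ge0; [nra | exact: ltW].
have [Nb hNb] := @bound_nat R (2 * K / r).
pose N0 := maxn (maxn 2 Ne) Nb.
pose B := \sum_(m < N0) (`|a 0 m| + `|a 1 m|).
have B0 : 0 <= B by apply: sumr_ge0 => m _; rewrite !addr_ge0.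
pose f n := if n is 0 then K0 else A * n%:R `^ al + B * n%:R.
have fpt : forall k, f k <= A * k%:R `^ al + B * k%:R + K0.
  case=> [|k]; first by rewrite /f (_ : 0%:R = 0 :> R) // powR0 ?gt_eqF //; [lra | lra].
  rewrite /f; lra.
have N02 : (1 < N0)%N by rewrite /N0 !leq_max ltnSn.
have main := @super R q a eps f N0 hq N02 rec.
have bd : forall n i, `|a i n| <= f n.
  apply: main => //.
    move=> i [_|n lt]; first by rewrite /f /K0; have h1 := normr_ge0 (a 0 0%N); have h2 := normr_ge0 (a 1 0%N); move: i; apply: I2_ind; lra.
    have T := @term_le_sum R (fun m => `|a 0 m| + `|a 1 m|) N0 n.+1
      (fun k => ltac:(by rewrite !addr_ge0)) lt.
    rewrite /f -/B; have Bn : B <= B * n.+1%:R by rewrite ler_peMr // natge1.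
    have An : 0 <= A * n.+1%:R `^ al by rewrite mulr_ge0 // powR_ge0.
    have : `|a i n.+1| <= `|a 0 n.+1| + `|a 1 n.+1|.
      have h1 := normr_ge0 (a 0 n.+1); have h2 := normr_ge0 (a 1 n.+1).
      by move: i; apply: I2_ind; lra.
    simpl in T; rewrite -/B in T; lra.
  move=> i n ge.
  have n2 : (2 <= n)%N by apply: leq_trans ge; rewrite /N0 !leq_max leqnn.
  have n0 : (0 < n)%N by apply: leq_trans n2.
  have hNe : (Ne <= n)%N by apply: leq_trans ge; rewrite /N0 !leq_max leqnn orbT.
  have hNb' : (Nb <= n)%N by apply: leq_trans ge; rewrite /N0 !leq_max leqnn orbT.
  have /andP[q0 q1] := hq i.
  have q01 : 0 <= q i <= 1 by rewrite !ltW.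
  have q01' : 0 <= 1 - q i <= 1 by apply/andP; split; lra.
  have q01'' : 0 < 1 - q i < 1 by apply/andP; split; lra.
  rewrite (@bexp_rev R (q i) n f).
  have e1 := @bexp_le R (q i) n _ _ q01 (fun k _ => fpt k).
  have e2 := @bexp_le R (1 - q i) n _ _ q01' (fun k _ => fpt k).
  rewrite bexp_aff in e1; rewrite bexp_aff in e2.
  have l1 := @Eup R al (q i) n al1 (hq i) n0.
  have l2 := @Eup R al (1 - q i) n al1 q01'' n0.
  have ee := hE i n hNe.
  have fn : f n = A * n%:R `^ al + B * n%:R by case: (n) n0.
  rewrite fn.
  rewrite -/b in l1 l2.
  set X := n%:R `^ al in l1 l2 ee *.
  set Y := X / n%:R in l1 l2 *.
  have X1 : 1 <= X by exact: (@powR_ge1n R n al n0 (le_trans ler01 (ltW al1))).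
  have nR : 0 < n%:R :> R by rewrite ltr0n.
  have Y0 : 0 <= Y by apply: divr_ge0; [exact: (le_trans ler01 X1) | exact: ler0n].
  have rri := rle i; have Kli := Kle i.
  have hK : K * Y <= r / 2 * X.
    have : 2 * K / r <= n%:R by apply: le_trans hNb _; rewrite ler_nat.
    rewrite /Y => h.
    have h' : 2 * K <= r * n%:R by rewrite -ler_pdivrMl // mulrC.
    rewrite mulrA ler_pdivrMr // mulrAC; apply: ler_wpM2r; first exact: le_trans X1.
    lra.
  have gap : binom_exp (q i) n (fun k => k%:R `^ al) + binom_exp (1 - q i) n (fun k => k%:R `^ al)
     <= (1 - rr i) * X + KK i * Y.
    move: l1 l2; rewrite /KK /rr; lra.
  have g2 : (1 - rr i) * X + KK i * Y <= (1 - r) * X + K * Y.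
    have : r * X <= rr i * X by apply: ler_wpM2r => //; apply: le_trans X1.
    have : KK i * Y <= K * Y by apply: ler_wpM2r.
    lra.
  have Ag : A * (binom_exp (q i) n (fun k => k%:R `^ al)
      + binom_exp (1 - q i) n (fun k => k%:R `^ al)) <= A * ((1 - r) * X + K * Y).
    by apply: ler_wpM2l => //; lra.
  have AKY : A * (K * Y) <= A * (r / 2 * X) by apply: ler_wpM2l.
  have Ar : A * (r / 2) = 2 * K0 + Ce by rewrite /A; field; rewrite gt_eqF.
  have C1 : 2 * K0 + Ce * X <= (2 * K0 + Ce) * X by nra.
  have hlin : B * (n%:R * q i) + B * (n%:R * (1 - q i)) = B * n%:R by ring.
  have : A * (r / 2 * X) = (2 * K0 + Ce) * X by rewrite mulrA Ar.
  move=> hh; lra.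
move=> i; exists (A + B), 1%N => n n1.
apply: le_trans (bd n i) _.
case: n n1 => // n _; rewrite /f.
have h : n.+1%:R <= n.+1%:R `^ al :> R by apply: le1r_powR; [exact: natge1 | exact: ltW].
have : B * n.+1%:R <= B * n.+1%:R `^ al by apply: ler_wpM2l.
lra.
Qed.

Lemma case_eq (q : 'I_2 -> R) (a eps : 'I_2 -> nat -> R) (Ce : R) Ne :
  (forall i, 0 < q i < 1) -> 0 <= Ce ->
  (forall (i : 'I_2) n, (0 < n)%N -> a i n = binom_exp (q i) n (a 0)
     + binom_exp (q i) n (fun k => a 1 (n - k)%N) + eps i n) ->
  (forall i n, (Ne <= n)%N -> `|eps i n| <= Ce * n%:R) ->
  forall i, bigO_seq (a i) (fun n => n%:R * ln n%:R).
Proof.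
move=> hq Ce0 rec hE.
pose HH i := - (q i * ln (q i) + (1 - q i) * ln (1 - q i)).
have Hpos : forall i, 0 < HH i.
  move=> i; have /andP[q0 q1] := hq i.
  have l1 : ln (q i) < 0 by apply: ln_lt0; apply/andP.
  have l2 : ln (1 - q i) < 0 by apply: ln_lt0; apply/andP; split; lra.
  have : 0 < 1 - q i by lra.
  rewrite /HH; nra.
pose H := Num.min (HH 0) (HH 1).
have H0 : 0 < H by rewrite /H lt_min !Hpos.
have Hle : forall i, H <= HH i by apply: I2_ind; rewrite /H ge_min lexx ?orbT.
pose K0 := `|a 0 0%N| + `|a 1 0%N|.
have K00 : 0 <= K0 by rewrite addr_ge0.
pose A := (Ce + 1) / H.
have A0 : 0 <= A by rewrite /A; apply: divr_ge0; [lra | exact: ltW].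
have AH : A * H = Ce + 1 by rewrite /A; field; rewrite gt_eqF.
have [Nb hNb] := @bound_nat R (2 * A + 2 * K0).
pose N0 := maxn (maxn 2 Ne) Nb.
pose B := \sum_(m < N0) (`|a 0 m| + `|a 1 m|).
have B0 : 0 <= B by apply: sumr_ge0 => m _; rewrite !addr_ge0.
pose f n := if n is 0 then K0 else A * (n%:R * ln n%:R) + B * n%:R.
have fpt : forall k, f k <= A * (k%:R * ln k%:R) + B * k%:R + K0.
  case=> [|k]; first by rewrite /f (_ : 0%:R = 0 :> R) // !mul0r !mulr0 !add0r.
  rewrite /f; lra.
have N02 : (1 < N0)%N by rewrite /N0 !leq_max ltnSn.
have main := @super R q a eps f N0 hq N02 rec.
have bd : forall n i, `|a i n| <= f n.
  apply: main => //.
    move=> i [_|n lt]; first by rewrite /f /K0; have h1 := normr_ge0 (a 0 0%N); have h2 := normr_ge0 (a 1 0%N); move: i; apply: I2_ind; lra.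
    have T := @term_le_sum R (fun m => `|a 0 m| + `|a 1 m|) N0 n.+1
      (fun k => ltac:(by rewrite !addr_ge0)) lt.
    rewrite /f -/B; have Bn : B <= B * n.+1%:R by rewrite ler_peMr // natge1.
    have An : 0 <= A * (n.+1%:R * ln n.+1%:R).
      by rewrite mulr_ge0 // mulr_ge0 // ln_ge0 // natge1.
    have : `|a i n.+1| <= `|a 0 n.+1| + `|a 1 n.+1|.
      have h1 := normr_ge0 (a 0 n.+1); have h2 := normr_ge0 (a 1 n.+1).
      by move: i; apply: I2_ind; lra.
    simpl in T; rewrite -/B in T; lra.
  move=> i n ge.
  have n2 : (2 <= n)%N by apply: leq_trans ge; rewrite /N0 !leq_max leqnn.
  have n0 : (0 < n)%N by apply: leq_trans n2.
  have hNe : (Ne <= n)%N by apply: leq_trans ge; rewrite /N0 !leq_max leqnn orbT.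
  have hNb' : (Nb <= n)%N by apply: leq_trans ge; rewrite /N0 !leq_max leqnn orbT.
  have /andP[q0 q1] := hq i.
  have q01 : 0 <= q i <= 1 by rewrite !ltW.
  have q01' : 0 <= 1 - q i <= 1 by apply/andP; split; lra.
  have q01'' : 0 < 1 - q i < 1 by apply/andP; split; lra.
  rewrite (@bexp_rev R (q i) n f).
  have e1 := @bexp_le R (q i) n _ _ q01 (fun k _ => fpt k).
  have e2 := @bexp_le R (1 - q i) n _ _ q01' (fun k _ => fpt k).
  rewrite bexp_aff in e1; rewrite bexp_aff in e2.
  have l1 := @Eln R (q i) n (hq i) n0.
  have l2 := @Eln R (1 - q i) n q01'' n0.
  have ee := hE i n hNe.
  have fn : f n = A * (n%:R * ln n%:R) + B * n%:R by case: (n) n0.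
  rewrite fn.
  have nR : 0 < n%:R :> R by rewrite ltr0n.
  have nb : 2 * A + 2 * K0 <= n%:R by apply: le_trans hNb _; rewrite ler_nat.
  have Hi := Hle i.
  have gap : binom_exp (q i) n (fun k => k%:R * ln k%:R)
      + binom_exp (1 - q i) n (fun k => k%:R * ln k%:R)
     <= n%:R * ln n%:R - H * n%:R + 2.
    have : H * n%:R <= HH i * n%:R by apply: ler_wpM2r => //; apply: ltW.
    move: l1 l2; rewrite /HH; lra.
  have Ag : A * (binom_exp (q i) n (fun k => k%:R * ln k%:R)
      + binom_exp (1 - q i) n (fun k => k%:R * ln k%:R))
       <= A * (n%:R * ln n%:R - H * n%:R + 2).
    by apply: ler_wpM2l.
  have hlin : B * (n%:R * q i) + B * (n%:R * (1 - q i)) = B * n%:R by ring.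
  have : A * (H * n%:R) = (Ce + 1) * n%:R by rewrite mulrA AH.
  move=> hh; lra.
move=> i; exists (A + B / ln 2), 2%N => n n1.
apply: le_trans (bd n i) _.
case: n n1 => // n n1; rewrite /f.
have l2 : 0 < ln 2 :> R by apply: ln_gt0; lra.
have ll : ln 2 <= ln n.+1%:R :> R.
  by rewrite ler_ln ?posrE // ?ltr0n // ler_nat.
have h : B * n.+1%:R <= B / ln 2 * (n.+1%:R * ln n.+1%:R).
  have e : B / ln 2 * (n.+1%:R * ln n.+1%:R) = (B * (n.+1%:R * ln n.+1%:R)) / ln 2 by ring.
  have e2 : B * n.+1%:R = (B * (n.+1%:R * ln 2)) / ln 2 by field; rewrite gt_eqF.
  rewrite e e2 ler_pM2r ?invr_gt0 //.
  by apply: ler_wpM2l => //; apply: ler_wpM2l.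
lra.
Qed.

End CASES2.

Theorem lemma4p1 (R : realType) (p : 'I_2 -> 'I_2 -> R)
  (a eps : 'I_2 -> nat -> R) (alpha : R) :
  (forall i j, 0 < p i j < 1) ->
  (forall i, p i 0 + p i 1 = 1) ->
  (forall (i : 'I_2) (n : nat), (0 < n)%N ->
     a i n = binom_exp (p i 0) n (a 0)
             + binom_exp (p i 0) n (fun k => a 1 (n - k)%N) + eps i n) ->
  (forall i, bigO_seq (eps i) (fun n => (n%:R : R) `^ alpha)) ->
  (alpha < 1 -> forall i, bigO_seq (a i) (fun n => (n%:R : R))) /\
  (1 < alpha -> forall i, bigO_seq (a i) (fun n => (n%:R : R) `^ alpha)) /\
  (alpha = 1 -> forall i, bigO_seq (a i) (fun n => (n%:R : R) * ln (n%:R))).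
Proof.
move=> hp _ rec hO.
have hq : forall i, 0 < (fun j => p j 0) i < 1 := fun i => hp i 0.
have [Ce [Ne [Ce0 hE]]] : exists Ce : R, exists Ne : nat, 0 <= Ce /\
    (forall i n, (Ne <= n)%N -> `|eps i n| <= Ce * n%:R `^ alpha).
  have [C0 [N0 H0]] := hO 0; have [C1 [N1 H1]] := hO 1.
  exists (Num.max 0 (Num.max C0 C1)), (maxn N0 N1); split; first by rewrite le_max lexx.
  apply: I2_ind => n hn.
    apply: le_trans (H0 n _) _; first by apply: leq_trans hn; rewrite leq_max leqnn.
    by apply: ler_wpM2r; [exact: powR_ge0 | rewrite !le_max lexx !orbT].
  apply: le_trans (H1 n _) _; first by apply: leq_trans hn; rewrite leq_max leqnn orbT.
  by apply: ler_wpM2r; [exact: powR_ge0 | rewrite !le_max lexx !orbT].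
split; [|split].
- move=> alt1.
  pose b := Num.max alpha (2^-1).
  have b0 : 0 < b < 1.
    apply/andP; split; first by rewrite /b lt_max; apply/orP; right; rewrite invr_gt0.
    rewrite /b gt_max alt1 /=; lra.
  apply: (@case_lt R (fun i => p i 0) a eps b Ce (maxn 1 Ne) hq b0 Ce0 rec).
  move=> i n hn.
  have n1 : (0 < n)%N by apply: leq_trans hn; rewrite leq_max leqnn.
  apply: le_trans (hE i n _) _; first by apply: leq_trans hn; rewrite leq_max leqnn orbT.
  apply: ler_wpM2l => //; apply: ler_powR; first exact: natge1.
  by rewrite /b le_max lexx.
- move=> agt1.
  exact: (@case_gt R (fun i => p i 0) a eps alpha Ce Ne hq agt1 Ce0 rec hE).
- move=> ae1; subst alpha.
  apply: (@case_eq R (fun i => p i 0) a eps Ce Ne hq Ce0 rec).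
  by move=> i n hn; rewrite -(@powRr1 R n%:R) ?ler0n //; apply: hE.
Qed.
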